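(* For all integers $n\ge 1$, $0\le t\le n$ and $k\ge 1$, \[ \frac{\binom{n}{t}}{S(n,t,k)}\;\le\; F(n,t,k)\;\le\;\left\lceil \frac{\binom nt}{S^{+}(n,t,k)}\cdot n\right\rceil. \]
   Context: A CNF formula over variables $x_1,\dots,x_n$ is a conjunction of clauses (disjunctions of literals); a $k$-CNF has all clauses of width at most $k$; it is monotone if all literals are un-negated variables. $\mathrm{THR}_t:\{0,1\}^n\to\{0,1\}$ is defined by $\mathrm{THR}_t(x)=1$ iff $\sum_i x_i\ge t$. $\mathrm{sat}_t(F)$ is the set of satisfying assignments of $F$ of Hamming weight exactly $t$. $F$ is $t$-admissible if it has no satisfying assignment of Hamming weight less than $t$. $S(n,t,k)$ (resp. $S^+(n,t,k)$) is the maximum of $|\mathrm{sat}_t(F)|$ over all $t$-admissible $k$-CNF (resp. monotone $k$-CNF) formulas $F$ on $n$ variables. $F(n,t,k)$ is the smallest $q$ such that $\mathrm{THR}_t=\bigvee_{i=1}^q\psi_i$ as Boolean functions on $\{0,1\}^n$ for some $k$-CNF formulas $\psi_1,\dots,\psi_q$ on $x_1,\dots,x_n$. *)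

(* Defs.v *)
From mathcomp Require Import all_boot all_order all_algebra.
Set Implicit Arguments. Unset Strict Implicit. Unset Printing Implicit Defensive.

(* A literal over x_1..x_n is a pair (i, b): b = true means x_i, b = false means ~x_i. *)
Definition lit (n : nat) := ('I_n * bool)%type.
Definition clause (n : nat) := {set lit n}.
Definition cnf (n : nat) := {set clause n}.
Definition assign (n : nat) := {ffun 'I_n -> bool}.

Definition lit_eval n (l : lit n) (x : assign n) : bool := x l.1 == l.2.
Definition clause_eval n (C : clause n) (x : assign n) : bool :=
  [exists l in C, lit_eval l x].
Definition cnf_eval n (F : cnf n) (x : assign n) : bool :=
  [forall C in F, clause_eval C x].

Definition weight n (x : assign n) : nat := \sum_(i < n) (x i : nat).

Definition THR n (t : nat) (x : assign n) : bool := t <= weight x.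

Definition is_kcnf n (k : nat) (F : cnf n) : bool := [forall C in F, #|C| <= k].
Definition monotone n (F : cnf n) : bool := [forall C in F, [forall l in C, l.2]].

Definition sat_t n (t : nat) (F : cnf n) : {set assign n} :=
  [set x | cnf_eval F x && (weight x == t)].

Definition admissible n (t : nat) (F : cnf n) : bool :=
  [forall x : assign n, cnf_eval F x ==> (t <= weight x)].

Definition S (n t k : nat) : nat :=
  \max_(F : cnf n | is_kcnf k F && admissible t F) #|sat_t t F|.

Definition Splus (n t k : nat) : nat :=
  \max_(F : cnf n | [&& is_kcnf k F, monotone F & admissible t F]) #|sat_t t F|.

Definition representable (n t k q : nat) : bool :=
  [exists psi : {ffun 'I_q -> cnf n},
     [forall i, is_kcnf k (psi i)] &&
     [forall x : assign n, THR t x == [exists i, cnf_eval (psi i) x]]].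

(* For k >= 1 q = 2^n is always representable
   (one CNF of unit clauses per true point of THR_t, the unsatisfiable CNF
   {empty clause} otherwise), so the minimum over q <= 2^n is the true minimum. *)
Definition Fnum (n t k : nat) : nat :=
  \big[minn/(2 ^ n).+1]_(q < (2 ^ n).+1 | representable n t k q) (q : nat).

(* Main.v *)
Require Import Defs.
From mathcomp Require Import all_boot all_order all_fingroup all_algebra.
From mathcomp Require Import zify ring lra.
Set Implicit Arguments. Unset Strict Implicit. Unset Printing Implicit Defensive.

Import Order.TTheory GRing.Theory Num.Theory.

Section Basics.
Variable n : nat.
Local Open Scope nat_scope.

Definition act (x : assign n) (s : {perm 'I_n}) : assign n := [ffun i => x (s i)].

Lemma actM (x : assign n) s r : act (act x r) s = act x (s * r)%g.
Proof. by apply/ffunP=> i; rewrite !ffunE permM. Qed.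

Lemma act1 (x : assign n) : act x 1%g = x.
Proof. by apply/ffunP=> i; rewrite !ffunE perm1. Qed.

Lemma weightE (x : assign n) : weight x = #|[set i | x i]|.
Proof.
rewrite /weight -sum1_card [RHS]big_mkcond /=; apply: eq_bigr => i _.
by rewrite inE; case: (x i).
Qed.

Lemma weight_act (x : assign n) (s : {perm (ordinal n)}) : weight (act x s) = weight x.
Proof.
rewrite /weight [RHS](reindex_inj (@perm_inj _ s)) /=.
by apply: eq_bigr => i _; rewrite ffunE.
Qed.

Lemma count_bool (a : pred bool) (u : seq bool) :
  count a u = a true * count id u + a false * count negb u.
Proof. elim: u => [|b u IH] /=; first by rewrite !muln0. rewrite IH; case: b; case: (a true); case: (a false) => /=; lia. Qed.

Lemma weight_count (x : assign n) : weight x = count id [tuple x i | i < n].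
Proof.
rewrite /weight /= count_map -sum1_count.
rewrite big_enum_cond [RHS]big_mkcond /=.
by apply: eq_bigr => i _; case: (x i).
Qed.

Lemma act_trans (x : assign n) y : weight x = weight y -> exists s, act x s = y.
Proof.
move=> wxy.
set ty := [tuple y i | i < n]; set tx := [tuple x i | i < n].
have : perm_eq (tval ty) tx.
  apply/seq.permP => a; rewrite !(count_bool a).
  have cn u : count negb u = size u - count id u.
    by rewrite -(count_predC id u) addKn.
  by rewrite !cn !size_tuple -!weight_count wxy.
case/tuple_permP => p hp; exists p; apply/ffunP => i.
have := congr1 (fun u => tnth u i) (val_inj hp).
by rewrite /ty !tnth_mktuple ffunE => ->.
Qed.
End Basics.

Section Formulas.
Variable n : nat.
Local Open Scope nat_scope.
Implicit Types (x y : assign n) (s : {perm 'I_n}).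

Lemma card_assign : #|{: assign n}| = 2 ^ n.
Proof. by rewrite card_ffun card_bool card_ord. Qed.

Lemma card_W t : #|[set x : assign n | weight x == t]| = 'C(n, t).
Proof.
rewrite -[n in 'C(n, _)]card_ord -card_draws.
rewrite -(@card_imset _ _ (fun x : assign n => [set i | x i])); last first.
  move=> x y /= e; apply/ffunP => i; have := congr1 (fun A : {set 'I_n} => i \in A) e; rewrite /= !inE; exact.
apply: eq_card => A; rewrite [in RHS]inE; apply/imsetP/eqP.
  by case=> x; rewrite inE => /eqP <- ->; rewrite weightE.
move=> hA; exists [ffun i => i \in A]; last first.
  by apply/setP => i; rewrite inE ffunE.
rewrite inE weightE -hA; apply/eqP; by apply: eq_card => i; rewrite !inE ffunE.
Qed.

Lemma card_W_lt t : 0 < n -> #|[set x : assign n | weight x == t]| < 2 ^ n.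
Proof.
move=> n0; rewrite -card_assign.
pose z : assign n := [ffun => t == 0].
have hz : z \notin [set x : assign n | weight x == t].
  rewrite inE weightE; have [t0|t0] := eqVneq t 0.
    have -> : [set i | z i] = setT by apply/setP => i; rewrite !inE /z ffunE t0.
    by rewrite cardsT card_ord t0 -lt0n.
  have -> : [set i | z i] = set0 by apply/setP => i; rewrite !inE /z ffunE (negPf t0).
  by rewrite cards0 eq_sym.
rewrite -(cardsC [set x : assign n | weight x == t]) -addn1 leq_add2l card_gt0.
by apply/set0Pn; exists z; rewrite inE.
Qed.

Lemma exists_sub x t : t <= weight x ->
  exists y, weight y = t /\ forall i, y i -> x i.
Proof.
rewrite weightE => /card_geqP [u [uu su sub]].
exists [ffun i => i \in u]; split.
  rewrite weightE -su -(card_uniqP uu); by apply: eq_card => i; by rewrite !inE ffunE.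
by move=> i; rewrite ffunE => /sub; rewrite inE.
Qed.

Definition litp s (l : lit n) : lit n := (s l.1, l.2).
Definition clp s (C : clause n) : clause n := litp s @: C.
Definition cnfp s (F : cnf n) : cnf n := clp s @: F.

Lemma litp_inj s : injective (litp s).
Proof. by move=> [i b] [j c] [/perm_inj -> ->]. Qed.

Lemma clause_evalp s C x : clause_eval (clp s C) x = clause_eval C (act x s).
Proof.
apply/existsP/existsP => [[l /andP [/imsetP [l' hl' ->] hv]]|[l /andP [hl hv]]].
  by exists l'; rewrite hl' /lit_eval /= ffunE.
by exists (litp s l); rewrite imset_f //= /lit_eval /= -(ffunE (fun i => x (s i))).
Qed.

Lemma cnf_evalp s F x : cnf_eval (cnfp s F) x = cnf_eval F (act x s).
Proof.
apply/forallP/forallP => h C.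
  apply/implyP => hC; have := h (clp s C); rewrite imset_f // clause_evalp; exact.
apply/implyP => /imsetP [C' hC' ->]; rewrite clause_evalp.
by have := h C'; rewrite hC'.
Qed.

Lemma kcnfp s k F : is_kcnf k F -> is_kcnf k (cnfp s F).
Proof.
move=> /forallP h; apply/forallP => C; apply/implyP => /imsetP [C' hC' ->].
rewrite card_imset; last exact: litp_inj.
by have := h C'; rewrite hC'.
Qed.

Lemma monotone_eval F x y : monotone F -> cnf_eval F y -> (forall i, y i -> x i) ->
  cnf_eval F x.
Proof.
move=> /forallP hm /forallP hy hyx; apply/forallP => C; apply/implyP => hC.
have /existsP [l /andP [hl hv]] := implyP (hy C) hC.
apply/existsP; exists l; rewrite hl /=.
have := implyP (hm C) hC => /forallP /(_ l); rewrite hl /= => l2.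
move: hv; rewrite /lit_eval l2 => /eqP hyl; apply/eqP; exact: hyx.
Qed.

End Formulas.

Section Averaging.
Variables (n t : nat).
Local Open Scope nat_scope.
Implicit Types (x y a b : assign n) (s : {perm 'I_n}).
Let W := [set x : assign n | weight x == t].

Definition Ncnt x a := #|[set s : {perm 'I_n} | act x s == a]|.

Lemma Ncnt_le x a y b : x \in W -> a \in W -> y \in W -> b \in W ->
  Ncnt x a <= Ncnt y b.
Proof.
rewrite !inE => /eqP wx /eqP wa /eqP wy /eqP wb.
have [t1 h1] := act_trans (etrans wy (esym wx)).
have [t2 h2] := act_trans (etrans wb (esym wa)).
rewrite /Ncnt -(@card_imset _ _ (fun s => (t2^-1 * s * t1)%g)); last first.
  by move=> u v /= /mulIg /mulgI.
apply: subset_leq_card; apply/subsetP => r /imsetP [s]; rewrite !inE => /eqP hs ->.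
rewrite -actM h1 -actM hs -h2 actM mulVg act1 //.
Qed.

Lemma Ncnt_eq x a y b : x \in W -> a \in W -> y \in W -> b \in W ->
  Ncnt x a = Ncnt y b.
Proof. by move=> *; apply/eqP; rewrite eqn_leq !Ncnt_le. Qed.

Lemma sum_Ncnt x (A : {set assign n}) :
  \sum_(a in A) Ncnt x a = #|[set s : {perm 'I_n} | act x s \in A]|.
Proof.
rewrite -sum1_card (partition_big (act x) (mem A)) /=; last by move=> i; rewrite inE.
apply: eq_bigr => a ha; rewrite sum1_card /Ncnt; apply: eq_card => s.
rewrite inE [RHS]unfold_in /= inE; case: eqP => [->|]; by rewrite ?ha ?andbF.
Qed.

Lemma card_setb (T : finType) (B : {set T}) (P : pred T) :
  #|[set z in B | P z]| = \sum_(z in B) P z.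
Proof. rewrite -sum1_card [RHS]big_mkcond [LHS]big_mkcond /=.
by apply: eq_bigr => z _; rewrite inE; case: (z \in B); case: (P z). Qed.

Lemma card_setP (T : finType) (P : pred T) :
  #|[set z | P z]| = \sum_z P z.
Proof. rewrite -sum1_card [LHS]big_mkcond /=.
by apply: eq_bigr => z _; rewrite inE; case: (P z). Qed.

Lemma avg (A U : {set assign n}) : A \subset W -> U \subset W ->
  exists s, #|U| * #|A| <= #|W| * #|[set x in U | act x s \in A]|.
Proof.
move=> sAW sUW.
have [U0|[x0 hx0]] := set_0Vmem U.
  by exists 1%g; rewrite U0 cards0.
have x0W : x0 \in W := subsetP sUW _ hx0.
set N0 := Ncnt x0 x0.
have hN x a : x \in W -> a \in W -> Ncnt x a = N0.
  by move=> hx ha; apply: Ncnt_eq.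
have hB (B : {set assign n}) x : B \subset W -> x \in W ->
    #|[set s : {perm 'I_n} | act x s \in B]| = #|B| * N0.
  move=> sBW hx; rewrite -sum_Ncnt -sum_nat_const; apply: eq_bigr => a ha.
  by apply: hN => //; apply: (subsetP sBW).
have hP : #|{perm 'I_n}| = #|W| * N0.
  rewrite -(hB W x0 (subxx W) x0W); apply: eq_card => s.
  by rewrite !inE weight_act; move: x0W; rewrite inE.
have hP0 : 0 < #|{perm 'I_n}| by apply/card_gt0P; exists 1%g.
have hD : \sum_s #|[set x in U | act x s \in A]| = #|U| * (#|A| * N0).
  under eq_bigr => s _ do rewrite card_setb.
  rewrite exchange_big /= -sum_nat_const; apply: eq_bigr => x hx.
  rewrite -(hB A x sAW (subsetP sUW _ hx)) card_setP //.
case: (boolP [exists s, #|U| * #|A| <= #|W| * #|[set x in U | act x s \in A]|]).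
  by move=> /existsP.
move=> /existsPn h; exfalso.
have : \sum_(s : {perm 'I_n}) (#|W| * #|[set x in U | act x s \in A]|).+1
     <= \sum_(s : {perm 'I_n}) #|U| * #|A|.
  by apply: leq_sum => s _; rewrite ltnNge h.
rewrite sum_nat_const; under eq_bigr => s _ do rewrite -addn1.
rewrite big_split /= -big_distrr /= hD sum1_card.
rewrite (_ : #|xpredT| = #|W| * N0); last exact: hP.
have e2 : #|W| * (#|U| * (#|A| * N0)) = #|W| * N0 * (#|U| * #|A|).
  by rewrite -[RHS]mulnA [N0 * _]mulnC -mulnA.
rewrite e2; move: hP0; rewrite hP; move: (#|W| * N0) (#|U| * #|A|) => a b; lia.
Qed.
End Averaging.

Section Binom.
Local Open Scope ring_scope.
Lemma binom_term (p : rat) (n q i : nat) : 0 <= p -> p <= 1 -> n%:R <= q%:R * p ->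
  (i <= n)%N -> 'C(n, i)%:R <= 'C(q, i)%:R * p ^+ i :> rat.
Proof.
move=> p0 p1 hnq; elim: i => [|i IH] hi; first by rewrite !bin0 expr0 mulr1 lexx.
have hin : (i <= n)%N by apply: ltnW.
have hqn : (n <= q)%N.
  by rewrite -(ler_nat rat); apply: (le_trans hnq); rewrite ler_piMr.
have hiq : (i <= q)%N by apply: leq_trans hqn.
have hi1 : 0 < (i.+1)%:R :> rat by rewrite ltr0n.
rewrite -(ler_pM2l hi1) -natrM mul_bin_left mulrA -natrM mul_bin_left natrM.
rewrite natrM exprS.
have e1 : ((q - i)%:R * 'C(q, i)%:R * (p * p ^+ i)) =
          ((q - i)%:R * p) * ('C(q, i)%:R * p ^+ i) :> rat by ring.
rewrite e1; apply: ler_pM; rewrite ?ler0n //; last exact: IH.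
rewrite !natrB //.
have : i%:R * p <= i%:R :> rat by rewrite ler_piMr ?ler0n.
lra.
Qed.

Lemma binom_bound (p : rat) (n q : nat) : 0 <= p -> p <= 1 -> n%:R <= q%:R * p ->
  2 ^+ n <= (1 + p) ^+ q :> rat.
Proof.
move=> p0 p1 hnq.
have hqn : (n <= q)%N.
  by rewrite -(ler_nat rat); apply: (le_trans hnq); rewrite ler_piMr.
have -> : 2 = 1 + 1 :> rat by rewrite -natr1.
rewrite !exprDn.
rewrite (big_ord_widen q.+1 (fun i => (1 ^+ (n - i) * 1 ^+ i) *+ 'C(n, i)) _) //.
rewrite [X in _ <= X](bigID (fun i : 'I_q.+1 => (i < n.+1)%N)) /=.
rewrite -[X in X <= _]addr0; apply: lerD.
  apply: ler_sum => i hi; rewrite !expr1n !mul1r -[p ^+ i *+ _]mulr_natl.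
  exact: (@binom_term p n q i p0 p1 hnq hi).
apply: sumr_ge0 => i _; apply: mulrn_wge0; rewrite expr1n mul1r; exact: exprn_ge0.
Qed.

Lemma decay (p : rat) (n q : nat) (C : nat) : 0 <= p -> p <= 1 -> n%:R <= q%:R * p ->
  (C < 2 ^ n)%N -> C%:R * (1 - p) ^+ q < 1 :> rat.
Proof.
move=> p0 p1 hnq hC.
have h2 := @binom_bound p n q p0 p1 hnq.
have hA : (1 - p) ^+ q * (1 + p) ^+ q <= 1.
  rewrite -exprMn; apply: exprn_ile1.
    apply: mulr_ge0; lra.
  have -> : (1 - p) * (1 + p) = 1 - p * p by ring.
  have : 0 <= p * p by apply: mulr_ge0.
  lra.
have h1p : 0 <= (1 - p) ^+ q by apply: exprn_ge0; lra.
have hC' : C%:R + 1 <= 2 ^+ n :> rat.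
  move: hC; rewrite -(ler_nat rat) natrX -natr1 => h; exact: h.
move: h1p hA; set a := (1 - p) ^+ q => h1p hA.
have hb : (C%:R + 1) * a <= 1.
  apply: le_trans hA; rewrite mulrC; apply: ler_wpM2l => //; exact: le_trans hC' h2.
have e : (C%:R + 1) * a = C%:R * a + a by ring.
rewrite e in hb; move: h1p; rewrite le0r => /orP [/eqP a0|apos].
  by rewrite a0 mulr0 ltr01.
lra.
Qed.

End Binom.

Section Greedy.
Local Open Scope ring_scope.
Variables (n t : nat) (A : {set assign n}).
Let W := [set x : assign n | weight x == t].
Hypothesis sAW : A \subset W.
Hypothesis W0 : (0 < #|W|)%N.
Let p : rat := #|A|%:R / #|W|%:R.

Definition uncov (ss : seq {perm 'I_n}) :=
  [set x in W | all (fun s => act x s \notin A) ss].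

Lemma p_le1 : 0 <= p <= 1.
Proof.
have hW : 0 < #|W|%:R :> rat by rewrite ltr0n.
rewrite /p divr_ge0 ?ler0n //= ler_pdivrMr // mul1r ler_nat.
exact: subset_leq_card.
Qed.

Lemma greedy m : exists ss : seq {perm 'I_n}, size ss = m /\
  #|uncov ss|%:R <= #|W|%:R * (1 - p) ^+ m.
Proof.
have hW : 0 < #|W|%:R :> rat by rewrite ltr0n.
have /andP [p0 p1] := p_le1.
elim: m => [|m [ss [hs hU]]].
  exists [::]; split => //; rewrite expr0 mulr1 ler_nat; apply: subset_leq_card.
  by apply/subsetP => x; rewrite inE => /andP [].
have sUW : uncov ss \subset W by apply/subsetP => x; rewrite inE => /andP [].
have [s hs'] := avg sAW sUW.
exists (s :: ss); split; first by rewrite /= hs.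
set U := uncov ss; set P := [set x : assign n | act x s \in A].
have eK : [set x in U | act x s \in A] = U :&: P by apply/setP => x; rewrite !inE.
have eU : uncov (s :: ss) = U :\: P.
  by apply/setP => x; rewrite !inE /= andbCA andbA.
rewrite eK in hs'; rewrite eU.
have e := cardsID P U.
move: hs'; rewrite -(ler_nat rat) !natrM => hs'.
have e' : #|U :\: P|%:R = #|U|%:R - #|U :&: P|%:R :> rat.
  rewrite -e natrD; ring.
rewrite e' exprSr mulrA.
have hk : #|U|%:R * p <= #|U :&: P|%:R.
  rewrite /p mulrA ler_pdivrMr // [X in _ <= X]mulrC; exact: hs'.
have h1 : #|U|%:R - #|U :&: P|%:R <= #|U|%:R * (1 - p) :> rat by lra.
apply: le_trans h1 _; apply: ler_wpM2r => //; lra.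
Qed.
End Greedy.

Section FnumLemmas.
Local Open Scope nat_scope.

Lemma bigmin_le (I : eqType) (r : seq I) (P : pred I) (F : I -> nat) N i :
  i \in r -> P i -> \big[minn/N]_(j <- r | P j) F j <= F i.
Proof.
elim: r => //= a r IH; rewrite inE big_cons => /orP [/eqP <-|ir] Pi.
  by rewrite Pi geq_minl.
case: (P a); last exact: IH.
by rewrite geq_min IH ?orbT.
Qed.

Lemma Fnum_le n t k q : representable n t k q -> Fnum n t k <= q.
Proof.
move=> hq; rewrite /Fnum.
case: (leqP q (2 ^ n)) => hqn.
  have hq' : q < (2 ^ n).+1 by [].
  exact: (@bigmin_le _ _ (fun i : 'I_(2 ^ n).+1 => representable n t k i)
    (fun i : 'I_(2 ^ n).+1 => (i : nat)) _ (Ordinal hq') (mem_index_enum _) hq).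
apply: leq_trans hqn.
apply: (big_ind (fun m => m <= (2 ^ n).+1)) => //.
  by move=> a b ha hb; rewrite geq_min ha.
by move=> i _; apply: ltnW (ltn_ord i).
Qed.

Lemma Fnum_spec n t k :
  Fnum n t k = (2 ^ n).+1 \/ representable n t k (Fnum n t k).
Proof.
rewrite /Fnum.
apply: (big_ind (fun m => m = (2 ^ n).+1 \/ representable n t k m)).
- by left.
- move=> a b ha hb; case: (leqP a b) => h.
    exact: ha.
  exact: hb.
- by move=> i hi; right.
Qed.
End FnumLemmas.

Unset Implicit Arguments.
Local Open Scope ring_scope.

Lemma card_lt_ord (n t : nat) : (t <= n)%N -> #|[set i : 'I_n | (i < t)%N]| = t.
Proof.
move=> tn.
have -> : [set i : 'I_n | (i < t)%N] = widen_ord tn @: [set: 'I_t].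
  apply/setP => i; rewrite inE; apply/idP/imsetP.
    by move=> hi; exists (Ordinal hi); rewrite ?inE //; apply: val_inj.
  by case=> j _ ->; rewrite /= ltn_ord.
rewrite card_imset ?cardsT ?card_ord //; move=> a b /(congr1 val) /= ab; exact: val_inj.
Qed.

Lemma Splus_pos (n t k : nat) : (t <= n)%N -> (1 <= k)%N ->
  exists2 G : cnf n, [&& is_kcnf k G, monotone G & admissible t G] &
    (0 < #|sat_t t G|)%N.
Proof.
move=> tn k1.
pose T := [set i : 'I_n | (i < t)%N].
pose G : cnf n := (fun i : 'I_n => [set ((i, true) : lit n)]) @: T.
have evG x : cnf_eval G x = (T \subset [set i | x i]).
  apply/forallP/subsetP => [h i hi|h C].
    have := implyP (h [set ((i, true) : lit n)]) (imset_f _ hi).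
    case/existsP => l /andP [hl hv]; move: hl; rewrite in_set1 => /eqP el.
    by move: hv; rewrite el /lit_eval /= => /eqP xi; rewrite inE xi.
  apply/implyP => /imsetP [i hi ->]; apply/existsP; exists (i, true).
  by rewrite inE eqxx /lit_eval /=; have := h i hi; rewrite inE => ->.
exists G.
  apply/and3P; split.
  - apply/forallP => C; apply/implyP => /imsetP [i _ ->]; by rewrite cards1.
  - apply/forallP => C; apply/implyP => /imsetP [i _ ->]; apply/forallP => l.
    by apply/implyP; rewrite inE => /eqP ->.
  - apply/forallP => x; apply/implyP; rewrite evG weightE => /subset_leq_card.
    by rewrite card_lt_ord.
apply/card_gt0P; exists ([ffun i : 'I_n => (i < t)%N] : assign n).
rewrite inE evG weightE; apply/andP; split.
  by apply/subsetP => i; rewrite !inE ffunE.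
rewrite -[X in _ == X](card_lt_ord n t tn); apply/eqP; apply: eq_card => i.
by rewrite !inE ffunE.
Qed.

Theorem mainTheorem3 (n t k : nat) :
  (1 <= n)%N -> (t <= n)%N -> (1 <= k)%N ->
  ('C(n, t)%:R / (S n t k)%:R <= (Fnum n t k)%:R :> rat) /\
  ((Fnum n t k)%:Z <= Num.ceil ('C(n, t)%:R / (Splus n t k)%:R * n%:R : rat)).
Proof.
move=> n1 tn k1.
set W := [set x : assign n | weight x == t].
have cW : #|W| = 'C(n, t) := card_W n t.
have cWlt : (#|W| < 2 ^ n)%N := card_W_lt t n1.
rewrite -cW; split.
- have [FN|rep] := Fnum_spec n t k.
    case: (posnP (S n t k)) => [->|S0]; first by rewrite invr0 mulr0 ler0n.
    rewrite FN ler_pdivrMr ?ltr0n // -natrM ler_nat.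
    apply: leq_trans (ltnW cWlt) _.
    apply: leq_trans (leqnSn _) _; exact: leq_pmulr.
  case: (posnP (S n t k)) => [->|S0]; first by rewrite invr0 mulr0 ler0n.
  rewrite ler_pdivrMr ?ltr0n // -natrM ler_nat.
  case/existsP: rep => psi /andP [/forallP hk /forallP hr].
  have hS i : (#|sat_t t (psi i)| <= S n t k)%N.
    apply: leq_bigmax_cond; rewrite hk /=; apply/forallP => x; apply/implyP => hx.
    have := hr x; rewrite /THR => /eqP ->; apply/existsP; by exists i.
  have h1 : (#|W| <= \sum_(i < Fnum n t k) #|[set x in W | x \in sat_t t (psi i)]|)%N.
    under eq_bigr => i _ do rewrite card_setb.
    rewrite exchange_big /= -sum1_card; apply: leq_sum => x hx.
    have hw : weight x = t by move: hx; rewrite inE => /eqP.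
    have := hr x; rewrite /THR hw leqnn => /eqP /esym /existsP [i hi].
    rewrite (bigD1 i) //= inE hi hw eqxx; exact: leq_addr.
  apply: leq_trans h1 _; rewrite -[X in (_ <= X * _)%N]card_ord -sum_nat_const.
  apply: leq_sum => i _; apply: leq_trans (hS i).
  by apply: subset_leq_card; apply/subsetP => x; rewrite inE => /andP [].
- have [G hG hGs] := Splus_pos n t k tn k1.
  have hpos : (0 < #|[pred F : cnf n | [&& is_kcnf k F, monotone F & admissible t F]]|)%N.
    by apply/card_gt0P; exists G.
  have [F0 hF0 eF0] := eq_bigmax_cond (fun F : cnf n => #|sat_t t F|) hpos.
  have eS : Splus n t k = #|sat_t t F0| := eF0.
  have hGle : (#|sat_t t G| <= Splus n t k)%N.
    exact: (@leq_bigmax_cond _ [pred F : cnf n | [&& is_kcnf k F, monotone F & admissible t F]]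
             (fun F : cnf n => #|sat_t t F|) G hG).
  move: hF0; rewrite inE => /and3P [kF0 mF0 aF0].
  set A := sat_t t F0.
  have sAW : A \subset W by apply/subsetP => x; rewrite !inE => /andP [_ ->].
  have A0 : (0 < #|A|)%N by apply: leq_trans hGs _; rewrite -eS.
  have W0 : (0 < #|W|)%N by apply: leq_trans A0 (subset_leq_card sAW).
  rewrite eS.
  set x := (#|W|%:R / #|A|%:R * n%:R : rat).
  have x0 : 0 <= x by rewrite /x; apply: mulr_ge0 => //; apply: divr_ge0; exact: ler0n.
  have c0 : (0 <= Num.ceil x)%R by rewrite ceil_ge0; lra.
  pose q0 := `|Num.ceil x|%N.
  have eq0 : q0%:Z = Num.ceil x by rewrite /q0 gez0_abs.
  rewrite -eq0 lez_nat; apply: Fnum_le.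
  have /andP [p0 p1] := @p_le1 n t A sAW W0.
  have hq : n%:R <= q0%:R * (#|A|%:R / #|W|%:R) :> rat.
    have hx : x <= q0%:R.
      by apply: (le_trans (ceil_ge x)); rewrite -eq0.
    have hA0 : #|A|%:R != 0 :> rat by rewrite pnatr_eq0 -lt0n.
    have hW0 : #|W|%:R != 0 :> rat by rewrite pnatr_eq0 -lt0n.
    have e : x * (#|A|%:R / #|W|%:R) = n%:R by rewrite /x; field; apply/andP.
    rewrite -e; exact: ler_wpM2r.
  have [ss [hs hU]] := @greedy n t A sAW W0 q0.
  have hlt := @decay _ n q0 #|W| p0 p1 hq cWlt.
  have U0 : uncov t A ss = set0.
    apply/eqP; rewrite -cards_eq0.
    by have := le_lt_trans hU hlt; rewrite ltrn1 ltnS leqn0.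
  apply/existsP; exists [ffun i : 'I_q0 => cnfp (nth 1%g ss i) F0].
  apply/andP; split.
    by apply/forallP => i; rewrite ffunE; apply: kcnfp.
  apply/forallP => z; apply/eqP; apply/idP/existsP.
    rewrite /THR => /exists_sub [y [wy hyz]].
    have : y \notin uncov t A ss by rewrite U0 inE.
    rewrite !inE => hn.
    have /allPn [s hss hsA] : ~~ all (fun s : {perm 'I_n} => act y s \notin A) ss.
      by apply: contra hn => ha; rewrite ha andbT; apply/eqP.
    have hi : (index s ss < q0)%N by rewrite -hs index_mem.
    exists (Ordinal hi); rewrite ffunE cnf_evalp /= nth_index //.
    move: hsA; rewrite negbK inE => /andP [hF _].
    apply: monotone_eval mF0 hF _ => j; rewrite !ffunE; exact: hyz.
  case=> i; rewrite ffunE cnf_evalp => hi.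
  by have := implyP (forallP aF0 _) hi; rewrite weight_act.
Qed.
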